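(* Let $X$ be a finite $T_0$-space admitting a free action of $\mathbb{Z}_2$ by homeomorphisms. Then (for a suitable labelling of $X$) $X_M$ is a block matrix $(A_{i,j})_{i,j=1,2}$ with blocks of size $\frac{|X|}{2}\times\frac{|X|}{2}$ such that $A_{1,1}=A_{2,2}$ and $A_{1,2}=A_{2,1}$. In particular, $\det(X_M)=\det(A_{1,1}+A_{1,2})\det(A_{1,1}-A_{1,2})$.
   Context: A finite $T_0$-space is identified with a finite poset via $x\le y$ iff $U_x\subseteq U_y$, where $U_x$ is the minimal open set containing $x$. For a labelling $X=\{x_1,\dots,x_n\}$, $X_M=(x_{i,j})$ is the $n\times n$ matrix with $x_{i,j}=0$ if $x_i\le x_j$ and $x_{i,j}=1$ otherwise. *)

(* Defs.v *)
(* A finite topological space is a finType T with a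
   topology tau : {set {set T}} (finite, so closure under binary unions
   and intersections suffices). *)
From mathcomp Require Import all_boot all_order all_algebra.
Set Implicit Arguments. Unset Strict Implicit. Unset Printing Implicit Defensive.
Import GRing.Theory Num.Theory.

Definition is_topology (T : finType) (tau : {set {set T}}) : Prop :=
  [/\ set0 \in tau, [set: T] \in tau,
      (forall U V, U \in tau -> V \in tau -> U :|: V \in tau) &
      (forall U V, U \in tau -> V \in tau -> U :&: V \in tau)].

Definition is_T0 (T : finType) (tau : {set {set T}}) : Prop :=
  forall x y : T, x != y -> exists2 U, U \in tau & (x \in U) != (y \in U).

Definition minopen (T : finType) (tau : {set {set T}}) (x : T) : {set T} :=
  \bigcap_(U in tau | x \in U) U.

Definition tle (T : finType) (tau : {set {set T}}) (x y : T) : bool :=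
  minopen tau x \subset minopen tau y.

Definition continuous_fin (T : finType) (tau : {set {set T}}) (g : T -> T) : Prop :=
  forall U, U \in tau -> g @^-1: U \in tau.

Definition homeomorphism_fin (T : finType) (tau : {set {set T}}) (g : T -> T) : Prop :=
  exists2 h : T -> T, cancel g h /\ cancel h g &
    continuous_fin tau g /\ continuous_fin tau h.

(* A free action of Z_2 by homeomorphisms: the non-trivial element acts by
   a homeomorphism g with g o g = id and no fixed points. *)
Definition free_Z2_action (T : finType) (tau : {set {set T}}) (g : T -> T) : Prop :=
  [/\ homeomorphism_fin tau g, (forall x, g (g x) = x) & (forall x, g x != x)].

Definition XM (T : finType) (tau : {set {set T}}) (n : nat) (lab : 'I_n -> T)
  : 'M[int]_n :=
  \matrix_(i, j) (if tle tau (lab i) (lab j) then 0%R else 1%R).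

(* Main.v *)
Require Import Defs.
From mathcomp Require Import all_boot all_order all_algebra.
Import GRing.Theory Num.Theory.
Local Open Scope ring_scope.

Lemma minopen_g (T : finType) (tau : {set {set T}}) (g : T -> T) :
  continuous_fin tau g -> (forall x, g (g x) = x) ->
  forall x y, (y \in minopen tau (g x)) = (g y \in minopen tau x).
Proof.
move=> cg gg x y; rewrite /minopen.
apply/bigcapP/bigcapP => H V /andP [VT xV].
- have := H (g @^-1: V); rewrite !inE gg; apply.
  by rewrite cg // xV.
- have := H (g @^-1: V); rewrite !inE gg; apply.
  by rewrite cg // xV.
Qed.

Lemma tle_g (T : finType) (tau : {set {set T}}) (g : T -> T) :
  continuous_fin tau g -> (forall x, g (g x) = x) ->
  forall x y, tle tau (g x) (g y) = tle tau x y.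
Proof.
move=> cg gg x y; rewrite /tle.
apply/subsetP/subsetP => H z.
- move=> zx; have := H (g z); rewrite !(@minopen_g _ _ _ cg gg) gg; exact.
- rewrite !(@minopen_g _ _ _ cg gg); exact: H.
Qed.

Lemma det_sym_block (m : nat) (A B : 'M[int]_m) :
  \det (block_mx A B B A) = \det (A + B) * \det (A - B).
Proof.
have eP : \det (block_mx 1%:M 1%:M 0 1%:M : 'M[int]_(m + m)) = 1.
  by rewrite det_ublock det1 mulr1.
have eQ : \det (block_mx 1%:M (-1%:M) 0 1%:M : 'M[int]_(m + m)) = 1.
  by rewrite det_ublock det1 mulr1.
have -> : block_mx A B B A =
  block_mx 1%:M (-1%:M) 0 1%:M *m (block_mx (A + B) 0 B (A - B)
    *m block_mx 1%:M 1%:M 0 1%:M).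
  rewrite !mulmx_block !mulmx1 !mul1mx !mulmx0 !mul0mx ?mulmxN ?mulNmx ?mulmx1 ?mul1mx.
  congr block_mx; apply/matrixP => i j; rewrite !mxE.
  - by rewrite !addr0 addrK.
  - by rewrite addr0 [B i j + _]addrC subrK [A i j + _]addrC addrK.
  - by rewrite add0r addr0.
  - by rewrite add0r addrC subrK.
by rewrite !det_mulmx eP eQ det_lblock mul1r mulr1.
Qed.

Theorem mainTheorem18 (T : finType) (tau : {set {set T}}) (g : T -> T) :
  is_topology tau -> is_T0 tau -> free_Z2_action tau g ->
  exists (m : nat) (lab : 'I_(m + m) -> T),
    [/\ bijective lab,
        ulsubmx (XM tau lab) = drsubmx (XM tau lab),
        ursubmx (XM tau lab) = dlsubmx (XM tau lab) &
        \det (XM tau lab) =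
          \det (ulsubmx (XM tau lab) + ursubmx (XM tau lab)) *
          \det (ulsubmx (XM tau lab) - ursubmx (XM tau lab))].
Proof.
move=> _ _ [[h [gh hg] [cg _]] gg gx].
have ginj : injective g := can_inj gg.
pose S := [set x | (enum_rank x < enum_rank (g x))%N].
have gnS x : x \in S -> g x \notin S.
  by rewrite !inE gg -leqNgt => /ltnW.
have nSg : ~: S = g @^-1: S.
  apply/setP => x; rewrite !inE gg -leqNgt ltn_neqAle andbC.
  case: leqP => //= _; apply/esym.
  by rewrite (inj_eq val_inj) (inj_eq enum_rank_inj) gx.
pose f := fun j : 'I_#|S| => enum_val j.
have fS j : f j \in S by apply: enum_valP.
pose lab := fun i : 'I_(#|S| + #|S|) =>
  match split i with inl j => f j | inr j => g (f j) end.
have labl i : lab (lshift _ i) = f i :=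
  congr1 (fun s => match s with inl j => f j | inr j => g (f j) end)
    (unsplitK (inl i)).
have labr i : lab (rshift _ i) = g (f i) :=
  congr1 (fun s => match s with inl j => f j | inr j => g (f j) end)
    (unsplitK (inr i)).
have tg := @tle_g T tau g cg gg.
have E1 : ulsubmx (XM tau lab) = drsubmx (XM tau lab).
  by apply/matrixP => i j; rewrite !mxE !labl !labr tg.
have E2 : ursubmx (XM tau lab) = dlsubmx (XM tau lab).
  by apply/matrixP => i j; rewrite !mxE !labl !labr -[in RHS](gg (f j)) tg.
exists #|S|, lab; split => //.
- apply: inj_card_bij.
  + move=> i j; rewrite -[i]splitK -[j]splitK /lab !unsplitK.
    case: (split i) => a; case: (split j) => b /= E.
    * by rewrite (enum_val_inj E).
    * by have := gnS _ (fS b); rewrite -E fS.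
    * by have := gnS _ (fS a); rewrite E fS.
    * by rewrite (enum_val_inj (ginj _ _ E)).
  + by rewrite card_ord -(cardsC S) nSg card_preimset.
- by rewrite -{1}(submxK (XM tau lab)) -E1 -E2 det_sym_block.
Qed.
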